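(* The class of ($ISK_4$, wheel)-free graphs is 2-cutset-safe.
   Context: All graphs are finite and simple. A graph is $ISK_4$-free if it contains no induced subgraph isomorphic to a subdivision of $K_4$ (a graph obtained from $K_4$ by replacing edges by internally vertex-disjoint paths). A hole is a cycle with no chords (a chordless cycle). A wheel $(H,v)$ consists of a hole $H$ and a vertex $v$ with at least three neighbours in $H$; a graph is wheel-free if it contains no wheel as an induced subgraph. A connected graph $G$ has a 1-cutset if there is $x\in V(G)$ with $G\setminus\{x\}$ having at least two components. A 2-cutset is a pair of vertices $u,v$ with $G\setminus\{u,v\}$ not connected. For a component $C$ of $G\setminus\{u,v\}$, $\operatorname{cl}(C)$ is obtained from the subgraph induced by $C\cup\{u,v\}$ by adding the edge $uv$, and $\operatorname{cl}^*(C)$ is obtained from $\operatorname{cl}(C)$ by subdividing the edge $uv$ exactly once. A hereditary class $\mathcal{F}$ is 2-cutset-safe if for every $G\in\mathcal{F}$ with no 1-cutset, every 2-cutset $\{u,v\}$ of $G$ and every component $C$ of $G\setminus\{u,v\}$, either $\operatorname{cl}(C)\in\mathcal{F}$ or $\operatorname{cl}^*(C)\in\mathcal{F}$. *)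

(* Defs.v *)
From mathcomp Require Import all_boot.
Set Implicit Arguments. Unset Strict Implicit. Unset Printing Implicit Defensive.

Record sgraph := SGraph { vtx :> finType; adj : rel vtx }.
Arguments adj : clear implicits.

Definition simple (G : sgraph) : Prop :=
  symmetric (adj G) /\ irreflexive (adj G).

Section GraphNotions.
Variable G : sgraph.
Local Notation e := (adj G).

Definition walk (p : seq G) : bool :=
  if p is x :: p' then path e x p' else false.

Definition is_path_from_to (p : seq G) (a b : G) : Prop :=
  [/\ walk p, uniq p, head a p = a & last a p = b].

Definition consec (p : seq G) (x y : G) : Prop :=
  exists p1 p2, p = p1 ++ x :: y :: p2 \/ p = p1 ++ y :: x :: p2.

(* G contains an induced subgraph isomorphic to a subdivision of K4:
   four distinct branch vertices a i, and for each pair i < j a path P i j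
   from a i to a j; the paths are internally vertex-disjoint (and their
   interiors avoid the branch vertices), and every edge of G between two
   vertices of the union of the paths is an edge of one of the paths. *)
Definition contains_ISK4 : Prop :=
  exists (a : 'I_4 -> G) (P : 'I_4 -> 'I_4 -> seq G),
  let inU x := exists i j : 'I_4, i < j /\ x \in P i j in
  [/\ injective a,
      (forall i j : 'I_4, i < j -> is_path_from_to (P i j) (a i) (a j)),
      (forall (i j : 'I_4) x, i < j -> x \in P i j -> x \in codom a ->
          x = a i \/ x = a j),
      (forall (i j k l : 'I_4) x, i < j -> k < l -> (i, j) != (k, l) ->
          x \in P i j -> x \in P k l -> x \in codom a) &
      (forall x y, inU x -> inU y -> e x y ->
          exists i j : 'I_4, i < j /\ consec (P i j) x y)].

Definition ISK4_free : Prop := ~ contains_ISK4.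

(* A hole: a chordless cycle of length at least 4, given by the cyclic
   sequence c of its vertices; two vertices of c are adjacent in G iff
   they are cyclically consecutive on c. *)
Definition hole (c : seq G) : Prop :=
  [/\ uniq c, 4 <= size c &
      {in c &, forall x y, e x y = (next c x == y) || (next c y == x)}].

Definition contains_wheel : Prop :=
  exists (c : seq G) (v : G), [/\ hole c, v \notin c & 3 <= count (e v) c].

Definition wheel_free : Prop := ~ contains_wheel.

Definition adj_in (S : {set G}) : rel G :=
  fun x y => [&& x \in S, y \in S & e x y].

Definition connected_in (S : {set G}) : Prop :=
  forall x y, x \in S -> y \in S -> connect (adj_in S) x y.

Definition is_component (S C : {set G}) : Prop :=
  [/\ C \subset S, C != set0 &
      forall x y, x \in C -> y \in S -> (y \in C) = connect (adj_in S) x y].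

Definition has_1cutset : Prop :=
  exists x : G, ~ connected_in (~: [set x]).

Definition is_2cutset (u v : G) : Prop :=
  u != v /\ ~ connected_in (~: [set u; v]).

End GraphNotions.

Definition ISK4_wheel_free (G : sgraph) : Prop :=
  ISK4_free G /\ wheel_free G.

Section Closures.
Variables (G : sgraph) (u v : G) (C : {set G}).

Definition clV : finType := {x : G | x \in C :|: [set u; v]}.

Definition is_uv (x y : G) : bool :=
  ((x == u) && (y == v)) || ((x == v) && (y == u)).

Definition cl : sgraph :=
  @SGraph clV (fun x y => adj G (val x) (val y) || is_uv (val x) (val y)).

(* cl*(C): cl(C) with the edge uv subdivided once; the new vertex is None. *)
Definition cl_star_adj (x y : option clV) : bool :=
  match x, y with
  | Some x, Some y => adj G (val x) (val y) && ~~ is_uv (val x) (val y)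
  | Some x, None | None, Some x => (val x == u) || (val x == v)
  | None, None => false
  end.

Definition cl_star : sgraph := @SGraph (option clV : finType) cl_star_adj.

End Closures.

(* Main.v *)
Require Import Defs.
From mathcomp Require Import all_boot.
From mathcomp Require Import zify.
From Stdlib Require Import Classical.
Set Implicit Arguments. Unset Strict Implicit. Unset Printing Implicit Defensive.

Section Seqs.
Variable T : eqType.
Implicit Types (s p q : seq T) (x y z : T).

Definition pr s := zip s (behead s).
Definition cons2 s x y := ((x,y) \in pr s) || ((y,x) \in pr s).

Lemma pr_cc x y s : pr [:: x, y & s] = (x,y) :: pr (y :: s).
Proof. by []. Qed.

Lemma pr_consr a s x y : (x,y) \in pr s -> (x,y) \in pr (a :: s).
Proof. by case: s => [|b s] //= H; rewrite in_cons H orbT. Qed.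

Lemma prP s x y : (x,y) \in pr s <-> exists s1 s2, s = s1 ++ x :: y :: s2.
Proof.
split.
  elim: s => [|a s IH] //; case: s IH => [|b s] IH //.
  rewrite pr_cc in_cons => /orP [/eqP [-> ->]|/IH [s1 [s2 E]]].
    by exists [::], s.
  by exists (a :: s1), s2; rewrite E.
case=> s1 [s2 ->]; elim: s1 => [|a s1 IH] /=; first by rewrite pr_cc mem_head.
exact: pr_consr.
Qed.

Lemma mem_pr s x y : (x,y) \in pr s -> (x \in s) /\ (y \in s).
Proof.
by move/prP=> [s1 [s2 ->]]; rewrite !mem_cat !in_cons !eqxx !orbT.
Qed.

Lemma cons2C s x y : cons2 s x y = cons2 s y x.
Proof. by rewrite /cons2 orbC. Qed.

Lemma cons2_mem s x y : cons2 s x y -> (x \in s) /\ (y \in s).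
Proof. by case/orP=> /mem_pr [] *. Qed.

Lemma pr_rev s x y : ((x,y) \in pr (rev s)) = ((y,x) \in pr s).
Proof.
apply/idP/idP => /prP [s1 [s2 E]]; apply/prP.
  exists (rev s2), (rev s1); rewrite -(revK s) E rev_cat /= rev_cons rev_cons.
  by rewrite -!cats1 -!catA.
exists (rev s2), (rev s1); rewrite E rev_cat /= rev_cons rev_cons.
by rewrite -!cats1 -!catA.
Qed.

Lemma cons2_rev s x y : cons2 (rev s) x y = cons2 s x y.
Proof. by rewrite /cons2 !pr_rev orbC. Qed.

Lemma pr_cat x p y q :
  pr (x :: p ++ y :: q) = pr (x :: p) ++ (last x p, y) :: pr (y :: q).
Proof. by elim: p x => [|z p IH] x //=; rewrite !pr_cc IH. Qed.

Lemma pr_catl s1 s2 x y : (x,y) \in pr s1 -> (x,y) \in pr (s1 ++ s2).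
Proof. by move/prP=> [a [b ->]]; apply/prP; exists a, (b ++ s2); rewrite -catA. Qed.

Lemma pr_catr s1 s2 x y : (x,y) \in pr s2 -> (x,y) \in pr (s1 ++ s2).
Proof. by move/prP=> [a [b ->]]; apply/prP; exists (s1 ++ a), b; rewrite -catA. Qed.

Lemma cons2_catl s1 s2 x y : cons2 s1 x y -> cons2 (s1 ++ s2) x y.
Proof. by case/orP=> H; apply/orP; [left|right]; apply: pr_catl. Qed.

Lemma cons2_catr s1 s2 x y : cons2 s2 x y -> cons2 (s1 ++ s2) x y.
Proof. by case/orP=> H; apply/orP; [left|right]; apply: pr_catr. Qed.

Lemma path_pr (e : rel T) x s :
  path e x s = all (fun pq => e pq.1 pq.2) (pr (x :: s)).
Proof. by elim: s x => [|y s IH] x //=; rewrite IH. Qed.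

Lemma prN s x y : (x,y) \in pr s <->
  exists i, [/\ i.+1 < size s, nth x s i = x & nth x s i.+1 = y].
Proof.
split.
  move/prP=> [s1 [s2 ->]]; exists (size s1); rewrite size_cat /= !nth_cat ltnn subnn.
  have -> : (size s1).+1 < size s1 = false by lia.
  have -> : (size s1).+1 - size s1 = 1 by lia.
  split=> //; lia.
case=> i [Hi Hx Hy]; apply/prP.
exists (take i s), (drop i.+2 s).
rewrite -{1}(cat_take_drop i s); congr (_ ++ _).
rewrite (drop_nth x) ?(ltn_trans _ Hi) // (drop_nth x) // Hx Hy //.
Qed.

Lemma next_pr z c0 x y : uniq (z :: c0) -> x \in z :: c0 ->
  (next (z :: c0) x == y) = ((x,y) \in pr (rcons (z :: c0) z)).
Proof.
move=> U Hx; rewrite next_nth Hx.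
have Ei : nth z (rcons (z :: c0) z) (index x (z :: c0)).+1 = nth z c0 (index x (z :: c0)).
  rewrite /= nth_rcons; case: ltngtP => // H.
    by rewrite nth_default // ltnW.
  by rewrite H nth_default.
apply/eqP/idP.
  move=> Ny; apply/prN; exists (index x (z :: c0)); split.
  - by rewrite size_rcons ltnS index_mem.
  - by rewrite nth_rcons index_mem Hx nth_index.
  rewrite (set_nth_default z); first exact: (etrans Ei Ny).
  by rewrite size_rcons ltnS index_mem.
case/prN=> i [Hi Hxi Hyi].
have [Hic|Hic] := ltnP i (size (z :: c0)).
  have Ex : nth x (z :: c0) i = x by move: Hxi; rewrite nth_rcons Hic.
  have Ii : index x (z :: c0) = i by rewrite -{1}Ex index_uniq.
  rewrite Ii in Ei *; rewrite -Ei -Hyi; exact: set_nth_default.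
by move: Hi Hic; rewrite size_rcons; lia.
Qed.

End Seqs.

Lemma pr_map (T U : eqType) (f : T -> U) (s : seq T) x y :
  (x,y) \in pr s -> (f x, f y) \in pr (map f s).
Proof.
by move/prP=> [s1 [s2 ->]]; apply/prP; exists (map f s1), (map f s2); rewrite map_cat.
Qed.

Lemma cons2_map (T U : eqType) (f : T -> U) (s : seq T) x y :
  cons2 s x y -> cons2 (map f s) (f x) (f y).
Proof. by case/orP=> /(pr_map f) H; rewrite /cons2 H ?orbT. Qed.

Lemma pr_mapE (T U : eqType) (f : T -> U) (s : seq T) :
  pr (map f s) = map (fun pq => (f pq.1, f pq.2)) (pr s).
Proof. by elim: s => [|x s IH] //; case: s IH => [|y s] IH //=; rewrite -IH. Qed.

Lemma mem_pr_split (T : eqType) (s1 s2 : seq T) x pq :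
  (pq \in pr (s1 ++ x :: s2)) = (pq \in pr (rcons s1 x)) || (pq \in pr (x :: s2)).
Proof.
case: s1 => [|a s1]; first by [].
rewrite -cats1 !cat_cons !pr_cat.
have -> : pr [:: x] = [::] by [].
by rewrite !mem_cat !in_cons in_nil orbF orbA.
Qed.

Section GraphLemmas.
Variable G : sgraph.
Implicit Types (s p c : seq G) (x y z : G).

Lemma consecE s x y : consec s x y <-> cons2 s x y.
Proof.
split.
  by case=> s1 [s2 [E|E]]; apply/orP; [left|right]; apply/prP; exists s1, s2.
by case/orP=> /prP [s1 [s2 E]]; exists s1, s2; [left|right].
Qed.

Lemma walk_cons2 p : symmetric (adj G) ->
  walk p <-> p != [::] /\ (forall x y, cons2 p x y -> adj G x y).
Proof.
move=> sym; case: p => [|x p]; first by split=> // [][].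
rewrite /walk path_pr; split.
  move/allP=> H; split=> // a b /orP [] /H //=.
  by rewrite sym.
by case=> _ H; apply/allP => [[a b]] Hab; apply: H; rewrite /cons2 Hab.
Qed.

Lemma holeE z c0 : hole (z :: c0) <->
  [/\ uniq (z :: c0), 4 <= size (z :: c0) &
      {in z :: c0 &, forall x y, adj G x y = cons2 (rcons (z :: c0) z) x y}].
Proof.
split.
  case=> U S H; split=> // x y Hx Hy; rewrite H // /cons2 !next_pr //.
by case=> U S H; split=> // x y Hx Hy; rewrite H // /cons2 !next_pr //.
Qed.

Lemma hole_rot n c : hole c -> hole (rot n c).
Proof.
case=> U S H; split; rewrite ?rot_uniq ?size_rot //.
move=> x y; rewrite !mem_rot => Hx Hy; rewrite !next_rot //; exact: H.
Qed.

End GraphLemmas.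

Section Embed.
Variables (H G : sgraph) (f : H -> G).
Hypothesis finj : injective f.
Hypothesis fadj : forall x y, adj H x y = adj G (f x) (f y).

Lemma embed_ISK4 : contains_ISK4 H -> contains_ISK4 G.
Proof.
move=> [a [P /= [Ha HP H3 H4 H5]]].
exists (f \o a), (fun i j => map f (P i j)); split.
- by move=> i j /= /finj /Ha.
- move=> i j /HP [W U Hh Hl]; split.
  + case: (P i j) W => //= x p; rewrite path_map.
    by rewrite (@eq_path _ _ (adj H)) // => y z; rewrite /relpre fadj.
  + by rewrite map_inj_uniq.
  + by case: (P i j) Hh => //= x p ->.
  + by rewrite /= (last_map f _ (a i)) Hl.
- move=> i j x Hij /mapP [y Hy ->] /codomP [k /= /finj Ek].
  have: y \in codom a by apply/codomP; exists k.
  by case/(H3 _ _ _ Hij Hy) => ->; [left|right].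
- move=> i j k l x Hij Hkl Hne /mapP [y Hy ->] /mapP [y' Hy' /finj Ey].
  subst y'; have := H4 _ _ _ _ _ Hij Hkl Hne Hy Hy'.
  by case/codomP=> t ->; apply/codomP; exists t.
move=> x y [i [j [Hij /mapP [x0 Hx0 ->]]]] [k [l [Hkl /mapP [y0 Hy0 ->]]]].
rewrite -fadj => Hxy.
have [i' [j' [Hij' /consecE C]]] : exists i j : 'I_4, i < j /\ consec (P i j) x0 y0.
  by apply: H5 => //; [exists i, j | exists k, l].
by exists i', j'; split=> //; apply/consecE; apply: cons2_map.
Qed.

Lemma embed_wheel : contains_wheel H -> contains_wheel G.
Proof.
move=> [c [h [[U S Hn] Hh Hcnt]]].
exists (map f c), (f h); split.
- split; rewrite ?map_inj_uniq ?size_map //.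
  move=> x y /mapP [x0 Hx0 ->] /mapP [y0 Hy0 ->].
  by rewrite -fadj Hn // !next_map // !inj_eq.
- by rewrite mem_map.
by rewrite count_map (eq_count (a2 := adj H h)) // => z; rewrite /= fadj.
Qed.

End Embed.

Section Expand.
Variables (T U : eqType) (w : T) (m : T -> U) (u v : U) (Q : seq U).
Implicit Types (s p : seq T) (x y : T).

Definition L := u :: Q ++ [:: v].

Definition Espec s (s' : seq U) : Prop :=
  (w \notin s /\ s' = map m s) \/
  exists p1 p2 x y R, [/\ s = rcons p1 x ++ w :: y :: p2, w \notin p1, w \notin p2,
     x != w & y != w]
     /\ s' = map m (rcons p1 x) ++ R ++ map m (y :: p2)
     /\ ((m x = u /\ m y = v /\ R = Q) \/ (m x = v /\ m y = u /\ R = rev Q)).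

Lemma notin_rcons p x : w \notin p -> x != w -> w \notin rcons p x.
Proof. by rewrite mem_rcons in_cons negb_or eq_sym => -> ->. Qed.

Lemma notin_cons p x : w \notin p -> x != w -> w \notin x :: p.
Proof. by rewrite in_cons negb_or eq_sym => -> ->. Qed.

Lemma mem_neq p y : w \notin p -> y \in p -> y != w.
Proof. by move=> Hw Hy; apply/eqP => E; rewrite -E Hy in Hw. Qed.

Lemma Espec_mem s (s' : seq U) (z : U) : Espec s s' -> z \in s' ->
  (exists y, [/\ y \in s, y != w & z = m y]) \/ (w \in s /\ z \in Q).
Proof.
case=> [[Hw ->] /mapP [y Hy ->]|[p1 [p2 [x [y [R [[-> H1 H2 Hx Hy] [-> HR]]]]]]]].
  by left; exists y; split=> //; apply: (mem_neq Hw Hy).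
move=> Hz; rewrite !mem_cat in Hz; case/or3P: Hz => H.
- left; case/mapP: H => y0 Hy0 ->; exists y0; split.
  + by rewrite mem_cat Hy0.
  + by apply: (mem_neq (notin_rcons H1 Hx) Hy0).
  + by [].
- right; split; first by rewrite mem_cat mem_head orbT.
  by case: HR => [[_ [_ E]]|[_ [_ E]]]; move: H; rewrite E ?mem_rev.
- left; case/mapP: H => y0 Hy0 ->; exists y0; split.
  + by rewrite mem_cat in_cons; apply/orP; right; apply/orP; right.
  + by apply: (mem_neq (notin_cons H2 Hy) Hy0).
  + by [].
Qed.

Lemma Espec_memI s (s' : seq U) y : Espec s s' -> y \in s -> y != w -> m y \in s'.
Proof.
case=> [[Hw ->] Hy _|[p1 [p2 [x [y0 [R [[-> H1 H2 Hx Hy] [-> HR]]]]]]]].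
  exact: map_f.
move=> Hy' Hne; rewrite mem_cat in_cons in Hy'; case/or3P: Hy' => H.
- by rewrite mem_cat (map_f m H).
- by rewrite H in Hne.
- by rewrite !mem_cat (map_f m H) ?orbT.
Qed.

Lemma Espec_win s (s' : seq U) : Espec s s' -> w \in s -> exists p1 p2 x y R,
  [/\ s = rcons p1 x ++ w :: y :: p2, w \notin p1, w \notin p2, x != w & y != w]
     /\ s' = map m (rcons p1 x) ++ R ++ map m (y :: p2)
     /\ ((m x = u /\ m y = v /\ R = Q) \/ (m x = v /\ m y = u /\ R = rev Q)).
Proof. by case=> [[Hw _] H|//]; rewrite H in Hw. Qed.

Lemma pr_mid p1 p2 x y pq : w \notin p1 -> w \notin p2 -> x != w -> y != w ->
  pq \in pr (rcons p1 x ++ w :: y :: p2) -> pq.1 != w -> pq.2 != w ->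
  (pq \in pr (rcons p1 x)) || (pq \in pr (y :: p2)).
Proof.
move=> H1 H2 Hx Hy Hpq; rewrite cat_rcons mem_pr_split in Hpq.
case/orP: Hpq => [->//|].
rewrite pr_cc in_cons => /orP [/eqP -> _ /=|]; first by rewrite eqxx.
rewrite pr_cc in_cons => /orP [/eqP -> /=|->]; first by rewrite eqxx.
by rewrite orbT.
Qed.

Lemma Espec_cons2 s (s' : seq U) (z z' : U) : Espec s s' -> cons2 s' z z' ->
  (exists y y', [/\ y != w, y' != w, cons2 s y y', z = m y & z' = m y'])
  \/ (w \in s /\ cons2 L z z').
Proof.
have key : forall s (s' : seq U) (z z' : U), Espec s s' -> (z, z') \in pr s' ->
  (exists y y', [/\ y != w, y' != w, (y, y') \in pr s, z = m y & z' = m y'])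
  \/ (w \in s /\ cons2 L z z').
  move=> {}s {}s' {}z {}z' [[Hw ->]|[p1 [p2 [x [y [R [[-> H1 H2 Hx Hy] [-> HR]]]]]]]].
    rewrite pr_mapE => /mapP [[y y'] Hyy [-> ->]]; left; exists y, y'.
    by case/mem_pr: (Hyy) => A B; split=> //; [apply: (mem_neq Hw A)|apply: (mem_neq Hw B)].
  have Hs : forall pq, pq \in pr (rcons p1 x) -> pq \in pr (rcons p1 x ++ w :: y :: p2).
    by move=> pq Hpq; rewrite cat_rcons mem_pr_split Hpq.
  have Hs2 : forall pq, pq \in pr (y :: p2) -> pq \in pr (rcons p1 x ++ w :: y :: p2).
    move=> [a b] Hpq.
    have -> : rcons p1 x ++ w :: y :: p2 = (rcons p1 x ++ [:: w]) ++ y :: p2 by rewrite -catA.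
    exact: pr_catr.
  rewrite map_rcons -cats1 -catA cat1s mem_pr_split => /orP [].
    rewrite -map_rcons pr_mapE => /mapP [[a b] Hab [-> ->]]; left; exists a, b.
    have /mem_pr [A B] := Hab; have Hn := notin_rcons H1 Hx.
    by split=> //; [apply: (mem_neq Hn A)|apply: (mem_neq Hn B)|apply: Hs].
  rewrite map_cons -cat_cons mem_pr_split => /orP [].
    move=> H; right; split; first by rewrite mem_cat mem_head orbT.
    have E : rcons (m x :: R) (m y) = L \/ rcons (m x :: R) (m y) = rev L.
      case: HR => [[-> [-> ->]]|[-> [-> ->]]]; [left|right]; rewrite /L -cats1 //.
      by rewrite rev_cons rev_cat /= -cats1 -cat_cons.
    case: E => E; first by rewrite -E /cons2 H.
    by rewrite -cons2_rev -E /cons2 H.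
  rewrite -map_cons pr_mapE => /mapP [[a b] Hab [-> ->]]; left; exists a, b.
  have /mem_pr [A B] := Hab; have Hn := notin_cons H2 Hy.
  by split=> //; [apply: (mem_neq Hn A)|apply: (mem_neq Hn B)|apply: Hs2].
move=> HE; case/orP=> H.
  case: (key _ _ _ _ HE H) => [[y [y' [A B C -> ->]]]|[Hw HL]].
    by left; exists y, y'; split=> //; rewrite /cons2 C.
  by right.
case: (key _ _ _ _ HE H) => [[y [y' [A B C -> ->]]]|[Hw HL]].
  by left; exists y', y; split=> //; rewrite /cons2 C orbT.
by right; rewrite cons2C.
Qed.


Lemma Espec_cons2I s (s' : seq U) y y' : Espec s s' -> y != w -> y' != w ->
  cons2 s y y' -> cons2 s' (m y) (m y').
Proof.
case=> [[Hw ->]|[p1 [p2 [x [y0 [R [[-> H1 H2 Hx Hy] [-> HR]]]]]]]] Hy1 Hy2.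
  exact: cons2_map.
have K : forall a b, a != w -> b != w -> (a, b) \in pr (rcons p1 x ++ w :: y0 :: p2) ->
    (m a, m b) \in pr (map m (rcons p1 x) ++ R ++ map m (y0 :: p2)).
  move=> a b Ha Hb /(pr_mid H1 H2 Hx Hy) /(_ Ha Hb) /orP [] /(pr_map m) H.
    by rewrite map_rcons cat_rcons mem_pr_split -map_rcons H.
  by rewrite catA; apply: pr_catr.
by case/orP=> /K H; rewrite /cons2 H ?orbT.
Qed.

Lemma Espec_cons2L s (s' : seq U) z z' : Espec s s' -> w \in s ->
  cons2 L z z' -> cons2 s' z z'.
Proof.
move=> HE /(Espec_win HE) [p1 [p2 [x [y [R [[_ H1 H2 Hx Hy] [-> HR]]]]]]] HLz.
have E : rcons (m x :: R) (m y) = L \/ rcons (m x :: R) (m y) = rev L.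
  case: HR => [[-> [-> ->]]|[-> [-> ->]]]; [left|right]; rewrite /L -cats1 //.
  by rewrite rev_cons rev_cat /= -cats1 -cat_cons.
have Hs : forall a b, (a,b) \in pr (rcons (m x :: R) (m y)) ->
    (a,b) \in pr (map m (rcons p1 x) ++ R ++ map m (y :: p2)).
  move=> a b H; rewrite map_rcons cat_rcons; apply: pr_catr.
  by rewrite map_cons -cat_cons mem_pr_split H.
have HL : cons2 (rcons (m x :: R) (m y)) z z'.
  by case: E => ->; rewrite ?cons2_rev.
by case/orP: HL => /Hs H; rewrite /cons2 H ?orbT.
Qed.

Hypothesis minj : forall y y', y != w -> y' != w -> m y = m y' -> y = y'.
Hypothesis mQ : forall y, y != w -> m y \notin Q.

Lemma map_inj_notin p : w \notin p -> uniq p -> uniq (map m p).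
Proof.
move=> Hw Up; rewrite map_inj_in_uniq // => a b Ha Hb.
by apply: minj; [apply: (mem_neq Hw Ha)|apply: (mem_neq Hw Hb)].
Qed.

Lemma Espec_uniq s (s' : seq U) : uniq Q -> Espec s s' -> uniq s -> uniq s'.
Proof.
move=> UQ [[Hw ->]|[p1 [p2 [x [y [R [[-> H1 H2 Hx Hy] [-> HR]]]]]]]] Up.
  exact: map_inj_notin.
have U1 : uniq (rcons p1 x ++ y :: p2).
  move: Up; rewrite !cat_uniq /= !negb_or => /and3P [-> /andP [_ ->] /andP [_ ->]].
  by rewrite andbT.
have HR' : forall z, (z \in R) = (z \in Q).
  by case: HR => [[_ [_ ->]]|[_ [_ ->]]] z //; rewrite mem_rev.
have UR : uniq R by case: HR => [[_ [_ ->]]|[_ [_ ->]]] //; rewrite rev_uniq.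
have UM : uniq (map m (rcons p1 x) ++ map m (y :: p2)).
  rewrite -map_cat; apply: map_inj_notin => //.
  by rewrite mem_cat negb_or notin_rcons ?notin_cons.
have Hperm : perm_eq (map m (rcons p1 x) ++ R ++ map m (y :: p2))
    (R ++ map m (rcons p1 x) ++ map m (y :: p2)) by rewrite perm_catCA.
rewrite (perm_uniq Hperm) cat_uniq UR UM andbT.
apply/hasPn => z; rewrite -map_cat => /mapP [a Ha ->]; rewrite /= HR'.
apply: mQ; apply: (mem_neq _ Ha).
by rewrite mem_cat negb_or notin_rcons ?notin_cons.
Qed.

Lemma Espec_size s (s' : seq U) : Q != [::] -> Espec s s' -> size s <= size s'.
Proof.
move=> HQ [[Hw ->]|[p1 [p2 [x [y [R [[-> H1 H2 Hx Hy] [-> HR]]]]]]]].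
  by rewrite size_map.
have : size R = size Q by case: HR => [[_ [_ ->]]|[_ [_ ->]]] //; rewrite size_rev.
move: HQ; rewrite -size_eq0 => HQ.
rewrite !size_cat !size_map !size_rcons /=; lia.
Qed.

Lemma Espec_head s (s' : seq U) : Espec s s' -> head (m w) s' = m (head w s).
Proof.
case=> [[Hw ->]|[p1 [p2 [x [y [R [[-> H1 H2 Hx Hy] [-> HR]]]]]]]].
  by case: s Hw.
by case: p1 H1.
Qed.

Lemma Espec_last s (s' : seq U) : Espec s s' -> last (m w) s' = m (last w s).
Proof.
case=> [[Hw ->]|[p1 [p2 [x [y [R [[-> H1 H2 Hx Hy] [-> HR]]]]]]]].
  by rewrite last_map.
by rewrite !last_cat /= last_map.
Qed.

Lemma Espec_rcons s (s' : seq U) z : Espec s s' -> z != w ->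
  Espec (rcons s z) (rcons s' (m z)).
Proof.
case=> [[Hw ->]|[p1 [p2 [x [y [R [[-> H1 H2 Hx Hy] [-> HR]]]]]]]] Hz.
  by left; split; [apply: notin_rcons | rewrite map_rcons].
right; exists p1, (rcons p2 z), x, y, R; split; first split=> //.
- by rewrite rcons_cat.
- exact: notin_rcons.
by split=> //; rewrite !rcons_cat -map_rcons.
Qed.

Lemma count_notin (Ph : pred T) (Pg : pred U) p :
  (forall y, y != w -> Ph y = Pg (m y)) -> w \notin p ->
  count Ph p = count Pg (map m p).
Proof.
move=> HP Hw; rewrite count_map; apply: eq_in_count => y Hy /=.
by apply: HP; apply: (mem_neq Hw Hy).
Qed.

Lemma Espec_count (Ph : pred T) (Pg : pred U) s (s' : seq U) :
  (forall y, y != w -> Ph y = Pg (m y)) -> (w \in s -> ~~ Ph w) -> Espec s s' ->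
  count Ph s <= count Pg s'.
Proof.
move=> HP Hw0 [[Hs ->]|[p1 [p2 [x [y [R [[Es H1 H2 Hx Hy] [-> HR]]]]]]]].
  by rewrite (count_notin HP Hs).
have Hw : ~~ Ph w by apply: Hw0; rewrite Es mem_cat mem_head orbT.
rewrite Es.
have A := count_notin HP (notin_rcons H1 Hx).
have B := count_notin HP (notin_cons H2 Hy).
rewrite !count_cat -A -B /= (negbTE Hw); lia.
Qed.

Definition E s : seq U :=
  if w \in s then
    let i := index w s in
    map m (take i s) ++ (if m (nth w s i.-1) == u then Q else rev Q)
      ++ map m (drop i.+1 s)
  else map m s.

Lemma Espec_E p1 p2 x y : w \notin p1 -> w \notin p2 -> x != w -> y != w ->
  (m x = u /\ m y = v) \/ (m x = v /\ m y = u) -> u != v ->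
  Espec (rcons p1 x ++ w :: y :: p2) (E (rcons p1 x ++ w :: y :: p2)).
Proof.
move=> H1 H2 Hx Hy Hxy Huv; right.
exists p1, p2, x, y, (if m x == u then Q else rev Q); split; first by split.
have Hn := notin_rcons H1 Hx.
have Hi : index w (rcons p1 x ++ w :: y :: p2) = size (rcons p1 x).
  by rewrite index_cat (negbTE Hn) /= eqxx addn0.
rewrite /E mem_cat mem_head orbT Hi take_size_cat //.
rewrite drop_cat ltnNge leqnSn /= subSnn /=.
rewrite nth_cat size_rcons ltnSn nth_rcons ltnn eqxx; split=> //.
case: Hxy => [[-> ->]|[-> ->]]; rewrite ?eqxx; first by left.
by rewrite eq_sym (negbTE Huv); right.
Qed.

End Expand.

Lemma count_le1 (T : eqType) (P : pred T) (c : seq T) :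
  uniq c -> (forall y y', P y -> P y' -> y = y') -> count P c <= 1.
Proof.
move=> U HP; elim: c U => [|x c IH] //= /andP [Hx U].
case: (boolP (P x)) => Px /=; last exact: IH.
suff -> : count P c = 0 by [].
apply/eqP; rewrite -leqn0 leqNgt -has_count; apply/hasPn => y Hy; apply/negP => Py.
by move: Hy; rewrite (HP _ _ Py Px) (negbTE Hx).
Qed.

Lemma uniq_mid (T : eqType) (p1 p2 : seq T) x w y :
  uniq (rcons p1 x ++ w :: y :: p2) ->
  [/\ w \notin p1, w \notin p2, x != w, y != w & x != y].
Proof.
rewrite cat_rcons cat_uniq => /and3P [_ Hh U2].
move: U2 => /= /andP [Hx1 /andP [Hw1 _]].
rewrite !in_cons !negb_or in Hx1 Hw1.
case/and3P: Hx1 => A B _; case/andP: Hw1 => C D.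
have -> : w \notin p1.
  apply/negP=> Hw; move/hasPn: Hh => /(_ w); rewrite !in_cons eqxx orbT => /(_ isT).
  by rewrite Hw.
by rewrite D A B eq_sym C.
Qed.

Lemma tri (T : eqType) (x y z u v : T) : (x = u \/ x = v) -> (y = u \/ y = v) ->
  (z = u \/ z = v) -> x != y -> x != z -> y != z -> False.
Proof. by case=> -> [] -> [] ->; rewrite !eqxx. Qed.

Lemma three_others (i : 'I_4) : exists j1 j2 j3 : 'I_4,
  [&& j1 != i, j2 != i, j3 != i, j1 != j2, j1 != j3 & j2 != j3].
Proof.
case: i => [[|[|[|[|k]]]] Hi] //.
- by exists (@Ordinal 4 1 isT), (@Ordinal 4 2 isT), (@Ordinal 4 3 isT).
- by exists (@Ordinal 4 0 isT), (@Ordinal 4 2 isT), (@Ordinal 4 3 isT).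
- by exists (@Ordinal 4 0 isT), (@Ordinal 4 1 isT), (@Ordinal 4 3 isT).
- by exists (@Ordinal 4 0 isT), (@Ordinal 4 1 isT), (@Ordinal 4 2 isT).
Qed.

Section Transport.
Variables (H G : sgraph) (w : H) (m : H -> G) (u v : G) (Q : seq G).
Hypothesis symG : symmetric (adj G).
Hypothesis symH : symmetric (adj H).
Hypothesis irrH : irreflexive (adj H).
Hypothesis Hw : forall y, adj H w y -> m y = u \/ m y = v.
Hypothesis Hinj : forall y y', y != w -> y' != w -> m y = m y' -> y = y'.
Hypothesis Hadj : forall y y', y != w -> y' != w -> adj H y y' = adj G (m y) (m y').
Hypothesis HQ0 : Q != [::].
Hypothesis HLu : uniq (L u v Q).
Hypothesis HLind : {in L u v Q &, forall z z', adj G z z' = cons2 (L u v Q) z z'}.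
Hypothesis HQm : forall y, y != w -> m y \notin Q.
Hypothesis HQadj : forall q y, q \in Q -> y != w -> adj G q (m y) -> m y = u \/ m y = v.

Let Lq := L u v Q.

Lemma uQ : uniq Q.
Proof. by move: HLu; rewrite /L /= cat_uniq => /andP [_ /and3P [->]]. Qed.

Lemma huv : u != v.
Proof.
apply/negP => /eqP E; move: HLu; rewrite /L /= E mem_cat mem_seq1 eqxx orbT.
by [].
Qed.

Lemma QinL q : q \in Q -> q \in Lq.
Proof. by move=> Hq; rewrite /Lq /L in_cons mem_cat Hq orbT. Qed.

Lemma uinL : u \in Lq.
Proof. by rewrite /Lq /L mem_head. Qed.

Lemma vinL : v \in Lq.
Proof. by rewrite /Lq /L in_cons mem_cat mem_seq1 eqxx !orbT. Qed.

Lemma nbw y : adj H w y -> y != w.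
Proof. by move=> A; apply/eqP => E; rewrite E irrH in A. Qed.

Lemma Espec_walk s : walk s -> uniq s ->
  (w \in s -> w != head w s /\ w != last w s) -> Espec w m u v Q s (E w m u Q s).
Proof.
move=> W U Hhl; case: (boolP (w \in s)) => Hws; last first.
  by left; split=> //; rewrite /E (negbTE Hws).
have [Hh Hl] := Hhl Hws.
case/splitPr: Hws W U Hh Hl => p p' W U Hh Hl.
case/lastP: p W U Hh Hl => [|p1 x] W U Hh Hl; first by rewrite eqxx in Hh.
case: p' W U Hh Hl => [|y p2] W U Hh Hl; first by rewrite last_cat /= eqxx in Hl.
have [H1 H2 Hx Hy Hxy] := uniq_mid U.
have Hxa : adj H x w.
  move/(walk_cons2 _ symH): W => [_]; apply; apply/orP; left; apply/prP.
  by exists p1, (y :: p2); rewrite cat_rcons.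
have Hya : adj H w y.
  move/(walk_cons2 _ symH): W => [_]; apply; apply/orP; left; apply/prP.
  by exists (rcons p1 x), p2.
apply: Espec_E => //; last exact: huv.
rewrite symH in Hxa; case: (Hw Hxa) => Ex; case: (Hw Hya) => Ey.
+ by move: Hxy; rewrite (Hinj (nbw Hxa) (nbw Hya) (etrans Ex (esym Ey))) ?eqxx.
+ by left.
+ by right.
+ by move: Hxy; rewrite (Hinj (nbw Hxa) (nbw Hya) (etrans Ex (esym Ey))) ?eqxx.
Qed.



Lemma hole_walk (z : H) c0 : hole (z :: c0) -> walk (z :: c0).
Proof.
case/holeE=> _ _ Hc; apply/(walk_cons2 _ symH); split=> // a b C.
have [A B] := cons2_mem C; rewrite Hc //.
by rewrite -cats1; apply: cons2_catl.
Qed.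

Lemma count_w (c : seq H) : uniq c -> count (adj H w) c <= 2.
Proof.
move=> Uc.
pose P1 y := adj H w y && (m y == u); pose P2 y := adj H w y && (m y == v).
have -> : count (adj H w) c = count (predU P1 P2) c.
  apply: eq_count => y /=; rewrite /P1 /P2.
  case: (boolP (adj H w y)) => //= A; case: (Hw A) => ->; rewrite eqxx ?orbT //.
have := count_predUI P1 P2 c.
have C1 : count P1 c <= 1.
  apply: count_le1 => // y y' /andP [A /eqP E] /andP [A' /eqP E'].
  by apply: Hinj; [apply: nbw A|apply: nbw A'|rewrite E E'].
have C2 : count P2 c <= 1.
  apply: count_le1 => // y y' /andP [A /eqP E] /andP [A' /eqP E'].
  by apply: Hinj; [apply: nbw A|apply: nbw A'|rewrite E E'].
lia.
Qed.

Lemma wheel_core (z : H) c0 (c' : seq G) (h : H) : hole (z :: c0) -> z != w ->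
  Espec w m u v Q (z :: c0) c' -> Espec w m u v Q (rcons (z :: c0) z) (rcons c' (m z)) ->
  h \notin z :: c0 -> h != w -> (w \in z :: c0 -> ~~ adj H h w) ->
  3 <= count (adj H h) (z :: c0) -> contains_wheel G.
Proof.
move=> Hc0 Hz E1 E2 Hh hw Hhw Hcnt.
have [Uc Sc Hc] := Hc0; move/holeE: Hc0 => [_ _ Hc'].
have Sz := Espec_size HQ0 E1.
case: c' E1 E2 Sz => [|z' c0'] E1 E2 Sz; first by [].
have Ez : z' = m z by have := Espec_head E1.
subst z'.
have memc := Espec_mem E1.
have wr : w \in z :: c0 -> w \in rcons (z :: c0) z by rewrite mem_rcons in_cons => ->; rewrite orbT.
exists (m z :: c0'), (m h); split.
- apply/holeE; split.
  + exact: (Espec_uniq Hinj HQm uQ E1 Uc).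
  + by apply: leq_trans Sz.
  move=> a b Ha Hb; apply/idP/idP => [Hab|].
  + case: (memc a Ha) => [[ya [Hya Hyaw Ea]]|[Hwc HaQ]];
      case: (memc b Hb) => [[yb [Hyb Hybw Eb]]|[Hwc' HbQ]].
    * subst a b; rewrite -Hadj // Hc' // in Hab.
      exact: (Espec_cons2I E2 Hyaw Hybw Hab).
    * subst a; apply: (Espec_cons2L E2 (wr Hwc')).
      rewrite symG in Hab; have := HQadj HbQ Hyaw Hab => Huv.
      have Hm : m ya \in Lq by case: Huv => ->; [exact: uinL|exact: vinL].
      by rewrite -HLind // ?QinL // symG.
    * subst b; apply: (Espec_cons2L E2 (wr Hwc)).
      have := HQadj HaQ Hybw Hab => Huv.
      have Hm : m yb \in Lq by case: Huv => ->; [exact: uinL|exact: vinL].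
      by rewrite -HLind // ?QinL.
    * by apply: (Espec_cons2L E2 (wr Hwc)); rewrite -HLind // ?QinL.
  case/(Espec_cons2 E2) => [[y [y' [Hy Hy' C -> ->]]]|[_ C]].
    have [A B] := cons2_mem C.
    have A' : y \in z :: c0 by move: A; rewrite mem_rcons in_cons => /orP [/eqP ->|]; rewrite ?mem_head.
    have B' : y' \in z :: c0 by move: B; rewrite mem_rcons in_cons => /orP [/eqP ->|]; rewrite ?mem_head.
    by rewrite -Hadj // Hc'.
  by have [A B] := cons2_mem C; rewrite HLind.
- apply/negP => /memc [[y [Hy Hyw Ey]]|[_ HQh]].
    by rewrite (Hinj hw Hyw Ey) Hy in Hh.
  by move: (HQm hw); rewrite HQh.
apply: leq_trans Hcnt _; apply: (Espec_count _ _ E1) => //.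
by move=> y Hy; rewrite Hadj.
Qed.


Lemma wheelT : contains_wheel H -> contains_wheel G.
Proof.
move=> [c [h [Hc Hh Hcnt]]].
have hw : h != w.
  apply/eqP=> E; subst h; have := count_w (let: And3 U _ _ := Hc in U); lia.
case: (boolP (w \in c)) => Hwc; last first.
  case: c Hc Hh Hcnt Hwc => [|z c0] Hc Hh Hcnt Hwc; first by case: Hc.
  have Hz : z != w by apply/eqP=> E; rewrite E mem_head in Hwc.
  have E1 : Espec w m u v Q (z :: c0) (map m (z :: c0)) by left.
  apply: (wheel_core (h := h) Hc Hz E1 (Espec_rcons E1 Hz)) => //.
  by rewrite (negbTE Hwc).
case/rot_to: Hwc => i t Er.
have Hc2 : hole (w :: t) by rewrite -Er; apply: hole_rot.
have Hcnt2 : 3 <= count (adj H h) (w :: t).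
  by rewrite -Er (permP (permEl (perm_rot i c))).
have Hh2 : h \notin w :: t by rewrite -Er mem_rot.
case/lastP: t Hc2 Hcnt2 Hh2 {Er} => [|t1 x] Hc2 Hcnt2 Hh2; first by case: Hc2.
have Hc3 : hole (x :: w :: t1).
  by rewrite -(rotr1_rcons x (w :: t1)); apply: hole_rot.
have Hcnt3 : 3 <= count (adj H h) (x :: w :: t1).
  by rewrite -(rotr1_rcons x (w :: t1)) (permP (permEl (perm_rot _ _))).
have Hh3 : h \notin x :: w :: t1.
  by rewrite -(rotr1_rcons x (w :: t1)) mem_rot.
case: t1 Hc3 Hcnt3 Hh3 {Hc2 Hcnt2 Hh2} => [|y t2] Hc3 Hcnt3 Hh3.
  by case: Hc3.
have [Uc _ Hc'] := Hc3; move/holeE: (Hc3) => [_ _ Hc''].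
have [H1 H2 Hx Hy Hxy] := uniq_mid (p1 := [::]) Uc.
have Hxa : adj H w x.
  rewrite symH Hc'' ?mem_head ?in_cons ?eqxx ?orbT //.
  by apply/orP; left; apply/prP; exists [::], (y :: rcons t2 x).
have Hya : adj H w y.
  rewrite Hc'' ?mem_head ?in_cons ?eqxx ?orbT //.
  by apply/orP; left; apply/prP; exists [:: x], (rcons t2 x).
have E1 : Espec w m u v Q (x :: w :: y :: t2) (E w m u Q (x :: w :: y :: t2)).
  apply: Espec_walk; [exact: hole_walk|exact: Uc|] => _; split=> /=.
    by rewrite eq_sym.
  apply/eqP => Ew.
  by move: (mem_last y t2); rewrite -Ew in_cons eq_sym (negbTE Hy) (negbTE H2).
apply: (wheel_core (h := h) Hc3 Hx E1 (Espec_rcons E1 Hx)) => // _.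
apply/negP=> Ahw; rewrite symH in Ahw.
have Hmuv : m x != m y.
  by apply/eqP=> E; move: Hxy; rewrite (Hinj Hx Hy E) eqxx.
move: Hh3; rewrite !in_cons !negb_or => /and4P [Hhx _ Hhy _].
case: (Hw Ahw) => Eh; case: (Hw Hxa) => Ex; case: (Hw Hya) => Ey;
  try (by move: Hmuv; rewrite Ex Ey eqxx);
  try (by move: Hhx; rewrite (Hinj hw Hx (etrans Eh (esym Ex))) eqxx);
  by move: Hhy; rewrite (Hinj hw Hy (etrans Eh (esym Ey))) eqxx.
Qed.


Lemma head_ne (T : eqType) (x y : T) s : s != [::] -> head x s = head y s.
Proof. by case: s. Qed.

Lemma last_ne (T : eqType) (x y : T) s : s != [::] -> last x s = last y s.
Proof. by case: s. Qed.

Lemma path_nbrs (s : seq H) x y : is_path_from_to s x y -> x != y ->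
  (exists n, n \in s /\ adj H x n) /\ (exists n, n \in s /\ adj H y n).
Proof.
case=> W U Hh Hl Hxy; have [Hne Hc] := (walk_cons2 _ symH).1 W.
case: s W U Hh Hl Hne Hc => [|x0 s] // W U /= Hh Hl _ Hc; subst x0.
split.
  case: s Hl Hc {W U} => [|n s] Hl Hc; first by move: Hxy; rewrite -Hl /= eqxx.
  exists n; split; first by rewrite in_cons mem_head orbT.
  by apply: Hc; rewrite /cons2 pr_cc mem_head.
case/lastP: s Hl Hc {W U} => [|s' n] Hl Hc; first by move: Hxy; rewrite -Hl /= eqxx.
rewrite last_rcons in Hl; subst n.
exists (last x s'); split.
  by rewrite -rcons_cons mem_rcons in_cons mem_last orbT.
rewrite symH; apply: Hc; apply/orP; left; apply/prP.
exists (belast x s'), [::].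
by rewrite -rcons_cons lastI -!cats1 -catA.
Qed.

Lemma isk4T : contains_ISK4 H -> contains_ISK4 G.
Proof.
move=> [a [P /= [Ha HP H3 H4 H5]]].
have aw : forall i, a i != w.
  move=> i; apply/eqP => Ei.
  have nb : forall j : 'I_4, j != i -> exists n (i1 j1 : 'I_4),
      [/\ i1 < j1, ((i1 == i) && (j1 == j)) || ((i1 == j) && (j1 == i)),
         n \in P i1 j1 & adj H (a i) n].
    move=> j Hji.
    have Haij : a i != a j by apply/eqP => /Ha E; rewrite E eqxx in Hji.
    case: (ltngtP i j) => Hij.
    - have [[n [Hn A]] _] := path_nbrs (HP _ _ Hij) Haij.
      by exists n, i, j; rewrite !eqxx.
    - have Haji : a j != a i by rewrite eq_sym.
      have [_ [n [Hn A]]] := path_nbrs (HP _ _ Hij) Haji.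
      by exists n, j, i; rewrite !eqxx orbT.
    - by rewrite (ord_inj Hij) eqxx in Hji.
  have dist : forall (j k : 'I_4) n1 n2 (i1 j1 k1 l1 : 'I_4), j != i -> k != i -> j != k ->
      [/\ i1 < j1, ((i1 == i) && (j1 == j)) || ((i1 == j) && (j1 == i)),
         n1 \in P i1 j1 & adj H (a i) n1] ->
      [/\ k1 < l1, ((k1 == i) && (l1 == k)) || ((k1 == k) && (l1 == i)),
         n2 \in P k1 l1 & adj H (a i) n2] -> n1 != n2.
    move=> j k n1 n2 i1 j1 k1 l1 Hji Hki Hjk [Hij1 Or1 Hn1 A1] [Hkl1 Or2 Hn2 A2].
    apply/eqP => E12; subst n2.
    have Hne : (i1, j1) != (k1, l1).
      apply/negP => /eqP [P1 P2]; subst k1 l1.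
      case/orP: Or1 => /andP [/eqP E1 /eqP E2]; case/orP: Or2 => /andP [/eqP E3 /eqP E4].
      + by move: Hjk; rewrite -E2 -E4 eqxx.
      + by move: Hki; rewrite -E3 E1 eqxx.
      + by move: Hji; rewrite -E1 E3 eqxx.
      + by move: Hjk; rewrite -E1 -E3 eqxx.
    have Hc := H4 _ _ _ _ _ Hij1 Hkl1 Hne Hn1 Hn2.
    have Ni : n1 != a i by apply/eqP => E; rewrite E irrH in A1.
    have Hj : n1 = a j.
      case/orP: Or1 => /andP [/eqP E1 /eqP E2]; case: (H3 _ _ _ Hij1 Hn1 Hc) => E.
      + by move: Ni; rewrite E E1 eqxx.
      + by rewrite E E2.
      + by rewrite E E1.
      + by move: Ni; rewrite E E2 eqxx.
    have Hk : n1 = a k.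
      case/orP: Or2 => /andP [/eqP E1 /eqP E2]; case: (H3 _ _ _ Hkl1 Hn2 Hc) => E.
      + by move: Ni; rewrite E E1 eqxx.
      + by rewrite E E2.
      + by rewrite E E1.
      + by move: Ni; rewrite E E2 eqxx.
    by move: Hjk; rewrite (Ha _ _ (etrans (esym Hj) Hk)) eqxx.
  have [j1 [j2 [j3 /and5P [D1 D2 D3 D12 /andP [D13 D23]]]]] := three_others i.
  have [n1 [i1 [k1 N1]]] := nb _ D1.
  have [n2 [i2 [k2 N2]]] := nb _ D2.
  have [n3 [i3 [k3 N3]]] := nb _ D3.
  have d12 := dist _ _ _ _ _ _ _ _ D1 D2 D12 N1 N2.
  have d13 := dist _ _ _ _ _ _ _ _ D1 D3 D13 N1 N3.
  have d23 := dist _ _ _ _ _ _ _ _ D2 D3 D23 N2 N3.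
  case: N1 => _ _ _ A1; case: N2 => _ _ _ A2; case: N3 => _ _ _ A3.
  rewrite Ei in A1 A2 A3.
  have md : forall n n', adj H w n -> adj H w n' -> n != n' -> m n != m n'.
    move=> n n' An An' D; apply/eqP => E; move/eqP: D; apply.
    exact: (Hinj (nbw An) (nbw An') E).
  exact: (tri (Hw A1) (Hw A2) (Hw A3) (md _ _ A1 A2 d12) (md _ _ A1 A3 d13) (md _ _ A2 A3 d23)).
have ES : forall i j : 'I_4, i < j -> Espec w m u v Q (P i j) (E w m u Q (P i j)).
  move=> i j Hij; have [W U Hh Hl] := HP _ _ Hij; apply: Espec_walk => // _.
  case: (P i j) W Hh Hl => [|x s] //= W Hh Hl; split.
    by rewrite Hh eq_sym aw.
  by rewrite Hl eq_sym aw.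
exists (m \o a), (fun i j => E w m u Q (P i j)); split.
- by move=> i j /= /(Hinj (aw i) (aw j)) /Ha.
- move=> i j Hij; have [W U Hh Hl] := HP _ _ Hij; have Es := ES _ _ Hij.
  have Sz := Espec_size HQ0 Es.
  have Hne : P i j != [::] by case: (P i j) W.
  have Hne' : E w m u Q (P i j) != [::].
    by move: Sz Hne; rewrite -!size_eq0; case: (size (P i j)) => // n; case: size.
  split.
  + apply/(walk_cons2 _ symG); split=> // z z' /(Espec_cons2 Es) [[y [y' [Hy Hy' C -> ->]]]|[_ C]].
      by rewrite -Hadj //; move/(walk_cons2 _ symH): W => [_]; apply.
    by have [A B] := cons2_mem C; rewrite HLind.
  + exact: (Espec_uniq Hinj HQm uQ Es U).
  + by rewrite (head_ne _ (m w) Hne') (Espec_head Es) (head_ne _ (a i) Hne) Hh.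
  + by rewrite (last_ne _ (m w) Hne') (Espec_last Es) (last_ne _ (a i) Hne) Hl.
- move=> i j x Hij Hx /codomP [k Ek].
  case: (Espec_mem (ES _ _ Hij) Hx) => [[x0 [Hx0 Hx0w Ex]]|[_ HxQ]].
    have Ex0 : x0 = a k by apply: Hinj => //; rewrite -Ex Ek.
    have : x0 \in codom a by apply/codomP; exists k.
    by case/(H3 _ _ _ Hij Hx0) => E0; [left|right]; rewrite Ex E0.
  by have := HQm (aw k); rewrite -[m (a k)]/((m \o a) k) -Ek HxQ.
- move=> i j k l x Hij Hkl Hne Hx Hx'.
  case: (Espec_mem (ES _ _ Hij) Hx) => [[x0 [Hx0 Hx0w Ex]]|[Hw1 HxQ]];
  case: (Espec_mem (ES _ _ Hkl) Hx') => [[x1 [Hx1 Hx1w Ex']]|[Hw2 HxQ']].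
  + have E01 : x0 = x1 by apply: Hinj => //; rewrite -Ex -Ex'.
    subst x1; case/codomP: (H4 _ _ _ _ _ Hij Hkl Hne Hx0 Hx1) => t Et.
    by apply/codomP; exists t; rewrite Ex Et.
  + by move: (HQm Hx0w); rewrite -Ex HxQ'.
  + by move: (HQm Hx1w); rewrite -Ex' HxQ.
  + by case/codomP: (H4 _ _ _ _ _ Hij Hkl Hne Hw1 Hw2) => t Et; move: (aw t); rewrite -Et eqxx.
move=> x y [i [j [Hij Hx]]] [k [l [Hkl Hy]]] Hxy.
have inLx : forall z (y0 : H), z \in Q -> y0 != w -> adj G z (m y0) -> m y0 \in Lq.
  by move=> z y0 Hz Hy0 A; case: (HQadj Hz Hy0 A) => ->; [exact: uinL|exact: vinL].
case: (Espec_mem (ES _ _ Hij) Hx) => [[x0 [Hx0 Hx0w Ex]]|[Hw1 HxQ]].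
  case: (Espec_mem (ES _ _ Hkl) Hy) => [[y0 [Hy0 Hy0w Ey]]|[Hw2 HyQ]].
    subst x y; rewrite -Hadj // in Hxy.
    have [i' [j' [Hij' /consecE C]]] := H5 x0 y0 (ex_intro _ i (ex_intro _ j (conj Hij Hx0)))
      (ex_intro _ k (ex_intro _ l (conj Hkl Hy0))) Hxy.
    exists i', j'; split=> //; apply/consecE.
    exact: (Espec_cons2I (ES _ _ Hij') Hx0w Hy0w C).
  exists k, l; split=> //; apply/consecE; apply: (Espec_cons2L (ES _ _ Hkl) Hw2).
  subst x; rewrite symG in Hxy.
  rewrite -HLind; first by rewrite symG.
    exact: (inLx _ _ HyQ Hx0w Hxy).
  exact: QinL.
exists i, j; split=> //; apply/consecE; apply: (Espec_cons2L (ES _ _ Hij) Hw1).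
case: (Espec_mem (ES _ _ Hkl) Hy) => [[y0 [Hy0 Hy0w Ey]]|[Hw2 HyQ]].
  subst y; rewrite -HLind //; first exact: QinL.
  exact: (inLx _ _ HxQ Hy0w Hxy).
by rewrite -HLind //; apply: QinL.
Qed.

End Transport.

Lemma split_two (T : eqType) (s : seq T) x y : x \in s -> y \in s -> x != y ->
  (exists s1 s3 s4, s = s1 ++ x :: s3 ++ y :: s4) \/
  (exists s1 s3 s4, s = s1 ++ y :: s3 ++ x :: s4).
Proof.
case/splitPr=> s1 s2; rewrite mem_cat in_cons => /or3P [Hy|/eqP Hy|Hy] Hxy.
- right; case/splitPr: Hy => t1 t2.
  by exists t1, t2, s2; rewrite -catA.
- by rewrite Hy eqxx in Hxy.
- left; case/splitPr: Hy => t1 t2.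
  by exists s1, t1, t2.
Qed.

Section FindQ.
Variable G : sgraph.
Hypothesis symG : symmetric (adj G).
Hypothesis irrG : irreflexive (adj G).
Variables (u v : G) (S : {set G}).

Definition cond (s : seq G) :=
  [/\ walk s, uniq s, head u s = u, last u s = v & {subset s <= S}].

Lemma shortcut s1 x s3 y s4 : cond (s1 ++ x :: s3 ++ y :: s4) -> adj G x y ->
  s3 != [::] -> cond (s1 ++ x :: y :: s4).
Proof.
move=> [W U Hh Hl Hs] Axy Hs3.
have Hsub : subseq (s1 ++ x :: y :: s4) (s1 ++ x :: s3 ++ y :: s4).
  apply: cat_subseq; first exact: subseq_refl.
  by rewrite /= eqxx; apply: suffix_subseq.
split.
- apply/(walk_cons2 _ symG); split; first by case: s1 {Hsub Hh Hl Hs W U}.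
  have [_ Hc] := (walk_cons2 _ symG).1 W.
  have Hpr : forall a b, (a,b) \in pr (s1 ++ x :: y :: s4) ->
      ((a,b) \in pr (s1 ++ x :: s3 ++ y :: s4)) || ((a,b) == (x,y)).
    move=> a b; rewrite mem_pr_split => /orP [H|].
      by rewrite mem_pr_split H.
    rewrite pr_cc in_cons => /orP [->|H]; first by rewrite orbT.
    by rewrite mem_pr_split; apply/orP; left; apply/orP; right; rewrite -cat_cons; apply: pr_catr.
  move=> a b /orP [] /Hpr /orP [H|/eqP [-> ->]] //.
  + by apply: Hc; rewrite /cons2 H.
  + by apply: Hc; rewrite /cons2 H orbT.
  + by rewrite symG.
- exact: subseq_uniq Hsub U.
- by case: s1 {Hsub Hl Hs W U} Hh.
- by rewrite last_cat /= -Hl last_cat /= last_cat.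
- by move=> z Hz; apply: Hs; apply: (mem_subseq Hsub).
Qed.

Lemma cond_eq s s' : s = s' -> cond s -> cond s'.
Proof. by move=> ->. Qed.

Lemma induced_walk n s : size s <= n -> cond s -> exists s',
  cond s' /\ (forall z z', z \in s' -> z' \in s' -> adj G z z' -> cons2 s' z z').
Proof.
elim: n s => [|n IH] s Hsz Hc.
  by case: s Hsz Hc => [|x s'] // _ [].
case: (classic (exists z z', [/\ z \in s, z' \in s, adj G z z' & ~~ cons2 s z z'])).
  case=> z [z' [Hz Hz' A Nc]].
  have Hzz : z != z' by apply/eqP => E; rewrite E irrG in A.
  case: (split_two Hz Hz' Hzz) => [[s1 [s3 [s4 E]]]|[s1 [s3 [s4 E]]]].
  - have Hs3 : s3 != [::].
      apply/eqP => E3; move: Nc; rewrite E E3 /cons2; apply/negP/negPn.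
      by apply/orP; left; apply/prP; exists s1, s4.
    have Hc' := shortcut (cond_eq E Hc) A Hs3.
    apply: IH Hc'; move: Hsz; rewrite E !size_cat /= size_cat /=.
    have : 0 < @size (Finite.sort (vtx G)) s3 by rewrite lt0n size_eq0.
    lia.
  - have Hs3 : s3 != [::].
      apply/eqP => E3; move: Nc; rewrite E E3 /cons2; apply/negP/negPn.
      by apply/orP; right; apply/prP; exists s1, s4.
    rewrite symG in A.
    have Hc' := shortcut (cond_eq E Hc) A Hs3.
    apply: IH Hc'; move: Hsz; rewrite E !size_cat /= size_cat /=.
    have : 0 < @size (Finite.sort (vtx G)) s3 by rewrite lt0n size_eq0.
    lia.
move=> Hno; exists s; split=> // z z' Hz Hz' A.
apply/negPn/negP => Nc; apply: Hno; by exists z, z'.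
Qed.

End FindQ.

Lemma path_in (G : sgraph) (S : {set G}) x p : path (adj_in S) x p -> {subset p <= S}.
Proof.
elim: p x => [|y p IH] x //= /andP [/and3P [_ Hy _] Hp] z.
by rewrite in_cons => /orP [/eqP -> //|]; apply: IH Hp z.
Qed.

Lemma find_Q (G : sgraph) (u v : G) (C : {set G}) :
  symmetric (adj G) -> irreflexive (adj G) -> ~~ adj G u v -> u != v ->
  ~ has_1cutset G -> ~ connected_in (~: [set u; v]) -> is_component (~: [set u; v]) C ->
  exists Q : seq G, [/\ Q != [::], uniq (L u v Q),
     {in L u v Q &, forall z z', adj G z z' = cons2 (L u v Q) z z'},
     (forall q, q \in Q -> q \notin C) &
     (forall q x, q \in Q -> x \in C -> ~~ adj G q x)].
Proof.
move=> symG irrG Nuv Huv H1 Hdis [HCS HC0 HCc].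
set S0 := ~: [set u; v].
have inS0 : forall x, (x \in S0) = (x != u) && (x != v).
  by move=> x; rewrite in_setC in_set2 negb_or.
have uC : u \notin C by apply/negP => /(subsetP HCS); rewrite inS0 eqxx.
have vC : v \notin C by apply/negP => /(subsetP HCS); rewrite inS0 eqxx andbF.
have symIn : forall S : {set G}, symmetric (adj_in S).
  by move=> S x y; rewrite /adj_in /= andbCA symG.
have [y0 [Hy0 Hy0C]] : exists y0, y0 \in S0 /\ y0 \notin C.
  apply: NNPP => Hno; apply: Hdis => x y Hx Hy.
  have allC : forall z, z \in S0 -> z \in C.
    by move=> z Hz; apply/negPn/negP => Nz; apply: Hno; exists z.
  by rewrite -(HCc x y (allC _ Hx) Hy) allC.
have wo : forall t t', (forall x, x != t -> x != t' -> x \in S0) ->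
    forall p x, path (adj_in (~: [set t])) x p -> x \notin C -> last x p = t' ->
    connect (adj_in (~: C)) x t'.
  move=> t t' HS; elim=> [|x1 p IH] x /=.
    by move=> _ _ ->; exact: connect0.
  case/andP=> /and3P [Hx Hx1 Axx1] Hp xC Hl.
  case: (eqVneq x t') => [->|Hxt']; first exact: connect0.
  have xS0 : x \in S0 by apply: HS => //; move: Hx; rewrite in_setC in_set1.
  have x1C : x1 \notin C.
    apply/negP => x1C.
    have x1S0 : x1 \in S0 := subsetP HCS _ x1C.
    have : connect (adj_in S0) x1 x by apply: connect1; rewrite /adj_in x1S0 xS0 symG.
    by rewrite -(HCc _ _ x1C xS0) (negbTE xC).
  apply: connect_trans (IH _ Hp x1C Hl); apply: connect1.
  by rewrite /adj_in !in_setC xC x1C.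
have Cu : connected_in (~: [set u]) by apply: NNPP => Hn; apply: H1; exists u.
have Cv : connected_in (~: [set v]) by apply: NNPP => Hn; apply: H1; exists v.
have /andP [y0u y0v] : (y0 != u) && (y0 != v) by rewrite -inS0.
have c1 : connect (adj_in (~: C)) y0 v.
  have := Cu y0 v; rewrite !in_setC !in_set1 y0u eq_sym Huv => /(_ isT isT).
  case/connectP => p Hp Hl.
  apply: (wo u v _ p y0 Hp Hy0C (esym Hl)).
  by move=> x Hxu Hxv; rewrite inS0 Hxu Hxv.
have c2 : connect (adj_in (~: C)) y0 u.
  have := Cv y0 u; rewrite !in_setC !in_set1 y0v Huv => /(_ isT isT).
  case/connectP => p Hp Hl.
  apply: (wo v u _ p y0 Hp Hy0C (esym Hl)).
  by move=> x Hxv Hxu; rewrite inS0 Hxu Hxv.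
have cuv : connect (adj_in (~: C)) u v.
  by apply: connect_trans c1; rewrite (sym_connect_sym (symIn _)).
case/connectP: cuv => p Hp Hl.
move: Hl; case: (shortenP Hp) => p' Hp' Up' _ Hl.
have Hc : cond u v (~: C) (u :: p').
  split=> //.
  - by apply: sub_path Hp' => x y /and3P [_ _ ->].
  - move=> z; rewrite in_cons => /orP [/eqP ->|Hz]; first by rewrite in_setC.
    exact: (path_in Hp').
have [s [[Ws Us Hhs Hls Hss] Hind]] := induced_walk symG irrG (leqnn _) Hc.
case: s Ws Us Hhs Hls Hss Hind => [|z s] // Ws Us /= Hhs Hls Hss Hind; subst z.
case/lastP: s Ws Us Hls Hss Hind => [|Q v'] Ws Us Hls Hss Hind.
  by rewrite /= in Hls; rewrite Hls eqxx in Huv.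
rewrite last_rcons in Hls; subst v'.
have EL : u :: rcons Q v = L u v Q by rewrite /L cats1.
rewrite EL in Ws Us Hss Hind.
exists Q; split=> //.
- apply/eqP => EQ; subst Q; move: Ws; rewrite /L /= andbT => A.
  by rewrite A in Nuv.
- move=> z z' Hz Hz'; apply/idP/idP; first exact: Hind.
  by move/(walk_cons2 _ symG): Ws => [_]; apply.
- move=> q Hq; have := Hss q; rewrite in_setC; apply.
  by rewrite /L in_cons mem_cat Hq orbT.
move=> q x Hq Hx; apply/negP => Aqx.
have qC : q \notin C.
  have := Hss q; rewrite in_setC; apply.
  by rewrite /L in_cons mem_cat Hq orbT.
have qu : q != u.
  apply/eqP => E; move: Us; rewrite /L /= mem_cat -E Hq.
  by [].
have qv : q != v.
  apply/eqP => E; move: Us; rewrite /L /= cat_uniq /= -E Hq /=.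
  by rewrite ?andbF ?andFb.
have qS0 : q \in S0 by rewrite inS0 qu qv.
have xS0 : x \in S0 := subsetP HCS _ Hx.
have : connect (adj_in S0) x q by apply: connect1; rewrite /adj_in xS0 qS0 symG.
by rewrite -(HCc _ _ Hx qS0) (negbTE qC).
Qed.

Theorem mainTheorem4 (G : sgraph) :
  simple G -> ISK4_wheel_free G -> ~ has_1cutset G ->
  forall u v : G, is_2cutset u v ->
  forall C : {set G}, is_component (~: [set u; v]) C ->
  ISK4_wheel_free (cl u v C) \/ ISK4_wheel_free (cl_star u v C).
Proof.
move=> [symG irrG] [Hisk Hwh] H1 u v [Huv Hdis] C HC.
have uvsym : forall a b, is_uv u v a b = is_uv u v b a.
  by move=> a b; rewrite /is_uv orbC andbC [(b == v) && _]andbC.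
have uvE : forall a b, is_uv u v a b -> (a = u /\ b = v) \/ (a = v /\ b = u).
  by move=> a b /orP [/andP [/eqP -> /eqP ->]|/andP [/eqP -> /eqP ->]]; [left|right].
case: (boolP (adj G u v)) => Auv.
  left.
  have fadj : forall x y : cl u v C, adj (cl u v C) x y = adj G (val x) (val y).
    move=> x y /=; case: (boolP (is_uv u v (val x) (val y))) => H; last by rewrite orbF.
    by rewrite orbT; case: (uvE _ _ H) => [[-> ->]|[-> ->]] //; rewrite symG.
  have vinj : injective (fun x : cl u v C => (val x : G)) by apply: val_inj.
  split.
    by move/(embed_ISK4 vinj fadj).
  by move/(embed_wheel vinj fadj).
right.
have [Q [HQ0 HLu HLind HQC HQCa]] := find_Q symG irrG Auv Huv H1 Hdis HC.
pose m (o : cl_star u v C) : G := if o is Some x then val x else u.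
have Auv' : ~~ adj G v u by rewrite symG.
have HuQ : u \notin Q by move: HLu; rewrite /L /= mem_cat negb_or => /andP [/andP []].
have HvQ : v \notin Q.
  by move: HLu; rewrite /L /= cat_uniq /= orbF andbT => /andP [_ /andP []].
have symH : symmetric (adj (cl_star u v C)).
  by move=> [x|] [y|] //=; rewrite symG uvsym.
have irrH : irreflexive (adj (cl_star u v C)).
  by move=> [x|] //=; rewrite irrG.
have Hw : forall y, adj (cl_star u v C) None y -> m y = u \/ m y = v.
  by move=> [x|] //= /orP [/eqP ->|/eqP ->]; [left|right].
have Hinj : forall y y' : cl_star u v C, y != None -> y' != None -> m y = m y' -> y = y'.
  by move=> [x|] [y|] //= _ _ /val_inj ->.
have Hadj : forall y y' : cl_star u v C, y != None -> y' != None ->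
    adj (cl_star u v C) y y' = adj G (m y) (m y').
  move=> [x|] [y|] //= _ _.
  case: (boolP (is_uv u v (val x) (val y))) => H; last by rewrite andbT.
  by rewrite andbF; case: (uvE _ _ H) => [[-> ->]|[-> ->]]; rewrite ?(negbTE Auv) ?(negbTE Auv').
have memCuv : forall x : clV u v C, [|| val x \in C, val x == u | val x == v].
  by move=> [x Hx] /=; move: Hx; rewrite in_setU in_set2.
have HQm : forall y : cl_star u v C, y != None -> m y \notin Q.
  move=> [x|] //= _; apply/negP => Hq.
  case/or3P: (memCuv x) => [Hc|/eqP E|/eqP E].
  - by move: (HQC _ Hq); rewrite Hc.
  - by move: HuQ; rewrite -E Hq.
  - by move: HvQ; rewrite -E Hq.
have HQadj : forall q (y : cl_star u v C), q \in Q -> y != None -> adj G q (m y) ->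
    m y = u \/ m y = v.
  move=> q [x|] //= Hq _ A.
  case/or3P: (memCuv x) => [Hc|/eqP E|/eqP E]; [|by left|by right].
  by move: (HQCa _ _ Hq Hc); rewrite A.
split.
  by move/(isk4T symG symH irrH Hw Hinj Hadj HQ0 HLu HLind HQm HQadj).
by move/(wheelT symG symH irrH Hw Hinj Hadj HQ0 HLu HLind HQm HQadj).
Qed.
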